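(* Let $A\in\{\mathbb Z,\mathbb R\}$ and let $K,X\subset\mathbb R^d$ be $d$-dimensional convex bodies with $\mathrm{width}(K)=\mathrm{Flt}_d^A(X)$. Then $K$ contains an $A$-unimodular copy of $X$.
   Context: A convex body is a nonempty compact convex subset of $\mathbb R^d$. An $A$-unimodular transformation is a map $T(x)=Mx+b$ with $M\in \mathrm{GL}_d(\mathbb Z)$ and $b\in A^d$; an $A$-unimodular copy of $X$ is $T(X)$ for such a $T$. For $u\in(\mathbb Z^d)^*$, $\mathrm{width}_u(K)=\sup_{x,y\in K}|u(x)-u(y)|$ and $\mathrm{width}(K)=\inf_{u\in(\mathbb Z^d)^*\setminus\{0\}}\mathrm{width}_u(K)$. $\mathrm{Flt}_d^A(X)=\sup\{\mathrm{width}(K'): K'\subset\mathbb R^d \text{ a convex body containing no } A\text{-unimodular copy of } X\}$. *)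

(* Defs.v *)
From HB Require Import structures.
From mathcomp Require Import all_boot all_order all_algebra.
From mathcomp Require Import all_classical all_reals all_analysis.
From mathcomp Require Import Rstruct Rstruct_topology.
Set Implicit Arguments. Unset Strict Implicit. Unset Printing Implicit Defensive.
Import Order.TTheory GRing.Theory Num.Theory.
Import numFieldNormedType.Exports.
Local Open Scope classical_set_scope.
Local Open Scope ring_scope.

Notation Rr := Rdefinitions.R.

Inductive coeffA := AZ | AR.

Definition inA (A : coeffA) (x : Rr) : Prop :=
  match A with AZ => x \is a Num.int | AR => True end.

Definition convex_setR (d : nat) (K : set 'rV[Rr]_d) : Prop :=
  forall x y t, K x -> K y -> 0 <= t <= 1 -> K ((1 - t) *: x + t *: y).

Definition convex_body (d : nat) (K : set 'rV[Rr]_d) : Prop :=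
  K !=set0 /\ compact K /\ convex_setR K.

Definition lin (d : nat) (c x : 'rV[Rr]_d) : Rr := \sum_(i < d) c 0 i * x 0 i.

(* d-dimensional: the affine hull of K is all of R^d, i.e. K lies in no
   affine hyperplane {x | c.x = const} with c <> 0. *)
Definition full_dim (d : nat) (K : set 'rV[Rr]_d) : Prop :=
  forall c : 'rV[Rr]_d, c != 0 -> exists x y, K x /\ K y /\ lin c x != lin c y.

Definition ilin (d : nat) (u : 'rV[int]_d) (x : 'rV[Rr]_d) : Rr :=
  \sum_(i < d) (u 0 i)%:~R * x 0 i.

Definition width_u (d : nat) (u : 'rV[int]_d) (K : set 'rV[Rr]_d) : \bar Rr :=
  ereal_sup [set (`|ilin u x - ilin u y|)%:E | x in K & y in K].

Definition width (d : nat) (K : set 'rV[Rr]_d) : \bar Rr :=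
  ereal_inf [set width_u u K | u in [set u : 'rV[int]_d | u != 0]].

(* A-unimodular transformation T(x) = x M + b, M ∈ GL_d(Z), b ∈ A^d
   (row-vector convention; M ranges over all of GL_d(Z) either way). *)
Definition unimod_map (d : nat) (M : 'M[int]_d) (b : 'rV[Rr]_d) (x : 'rV[Rr]_d)
  : 'rV[Rr]_d := x *m map_mx intr M + b.

Definition is_A_unimod (A : coeffA) (d : nat) (M : 'M[int]_d) (b : 'rV[Rr]_d) : Prop :=
  M \in unitmx /\ forall i, inA A (b 0 i).

Definition contains_copy (A : coeffA) (d : nat) (K X : set 'rV[Rr]_d) : Prop :=
  exists M b, is_A_unimod A M b /\ (unimod_map M b @` X) `<=` K.

Definition Flt (A : coeffA) (d : nat) (X : set 'rV[Rr]_d) : \bar Rr :=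
  ereal_sup [set width K' | K' in
     [set K' : set 'rV[Rr]_d | convex_body K' /\ ~ contains_copy A K' X]].

(* Main.v *)
Require Import Defs.
From HB Require Import structures.
From mathcomp Require Import all_boot all_order all_algebra.
From mathcomp Require Import all_classical all_reals all_analysis.
From mathcomp Require Import Rstruct Rstruct_topology.
From mathcomp Require Import zify ring lra finmap.
Set Implicit Arguments. Unset Strict Implicit. Unset Printing Implicit Defensive.
Import Order.TTheory GRing.Theory Num.Theory.
Import numFieldNormedType.Exports.
Local Open Scope classical_set_scope.
Local Open Scope ring_scope.
Lemma Zset_closed : closed [set x : Rr | x \is a Num.int].
Proof.
move=> p clp /=.
apply/negPn/negP => pZ.
set n := Num.floor p.
have [h1 h2] : (n%:~R < p) /\ (p < (n+1)%:~R).
  have := floor_itv p => /andP[a b]; split => //.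
  rewrite lt_neqAle a andbT; apply/negP => /eqP E; move/negP: pZ; apply; rewrite -E.
  by rewrite rpred_int.
have : nbhs p `]n%:~R, (n+1)%:~R[%classic.
  apply: open_nbhs_nbhs; split; first exact: interval_open.
  by rewrite /= in_itv /= h1 h2.
move=> /clp [z [/= zZ]]; rewrite /= in_itv /= => /andP[z1 z2].
move: zZ => /intrP[m zm]; subst z.
rewrite ltr_int in z1; rewrite ltr_int in z2.
lia.
Qed.
Definition Ke (d : nat) (K : set 'rV[Rr]_d) (e : Rr) : set 'rV[Rr]_d :=
  [set y | exists2 k, K k & `|k - y| <= e].

Lemma Ke_sub d (K : set 'rV[Rr]_d) (e : Rr) : 0 <= e -> K `<=` Ke K e.
Proof. by move=> e0 x Kx; exists x => //; rewrite subrr normr0. Qed.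

Lemma Ke_mono d (K : set 'rV[Rr]_d) e e' : e <= e' -> Ke K e `<=` Ke K e'.
Proof. by move=> ee y [k Kk h]; exists k => //; apply: le_trans ee. Qed.

Lemma compact_normbound d (K : set 'rV[Rr]_d) : compact K ->
  exists2 r, 0 < r & forall x, K x -> `|x| < r.
Proof.
move=> /compact_bounded /ex_strict_bound_gt0 [r r0 h]; exists r => //.
Qed.

Lemma bounded_of d (K : set 'rV[Rr]_d) r : (forall x, K x -> `|x| <= r) ->
  bounded_set K.
Proof.
move=> h; exists r; split; first by rewrite num_real.
move=> M rM x Kx /=; apply: le_trans (h _ Kx) (ltW rM).
Qed.

Lemma Ke_compact d (K : set 'rV[Rr]_d) (e : Rr) : 0 <= e -> compact K -> compact (Ke K e).
Proof.
move=> e0 cK.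
have cB : compact (closed_ball_ Num.norm (0 : 'rV[Rr]_d) e).
  apply: bounded_closed_compact; last exact: closed_closed_ball_.
  by apply: (@bounded_of _ _ e) => x; rewrite /closed_ball_ /= sub0r normrN.
have E : Ke K e = (fun z : 'rV[Rr]_d * 'rV[Rr]_d => z.1 + z.2) @` (K `*` closed_ball_ Num.norm 0 e).
  apply/seteqP; split.
  - move=> y [k Kk h]; exists (k, y - k); last by rewrite /= addrC subrK.
    by split => //=; rewrite /closed_ball_ /= sub0r normrN -normrN opprB.
  - move=> y [[k v] [Kk hv]] yE; rewrite -yE; exists k => //=.
    rewrite opprD addrA subrr sub0r normrN. have := hv. rewrite /closed_ball_ /=. by rewrite distrC subr0.
rewrite E; apply: continuous_compact; last exact: compact_setX.
apply: continuous_subspaceT; exact: add_continuous.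
Qed.

Lemma Ke_convex d (K : set 'rV[Rr]_d) (e : Rr) : 0 <= e -> convex_setR K -> convex_setR (Ke K e).
Proof.
move=> e0 cK x y t [k Kk hk] [l Kl hl] /andP[t0 t1].
exists ((1 - t) *: k + t *: l); first by apply: cK => //; rewrite t0 t1.
have -> : (1 - t) *: k + t *: l - ((1 - t) *: x + t *: y) =
   (1 - t) *: (k - x) + t *: (l - y).
  by rewrite !scalerBr opprD addrACA.
apply: le_trans (ler_normD _ _) _.
rewrite !normrZ (ger0_norm t0) ger0_norm ?subr_ge0 //.
have -> : e = (1 - t) * e + t * e by rewrite -mulrDl subrK mul1r.
apply: lerD; apply: ler_wpM2l => //; by rewrite subr_ge0.
Qed.

Lemma Ke_body d (K : set 'rV[Rr]_d) (e : Rr) : 0 <= e -> convex_body K -> convex_body (Ke K e).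
Proof.
move=> e0 [[x Kx] [cK cvK]]; split; first by exists x; apply: Ke_sub.
split; [exact: Ke_compact | exact: Ke_convex].
Qed.

Lemma Ke_cap d (K : set 'rV[Rr]_d) y : closed K ->
  (forall e : Rr, 0 < e -> e <= 1 -> Ke K e y) -> K y.
Proof.
move=> cK h; apply: cK => B /nbhs_ballP [e e0 eB].
have e20 : 0 < Num.min (e / 2) 1 by rewrite lt_min ltr01 andbT divr_gt0.
have [k Kk hk] := h _ e20 (ltac:(by rewrite ge_min lexx orbT)).
exists k; split => //; apply: eB; rewrite -ball_normE /= distrC.
apply: le_lt_trans hk _; rewrite gt_min; apply/orP; left.
by rewrite ltr_pdivrMr // ltr_pMr // ltr1n.
Qed.

Lemma min_pos (s : seq Rr) : (forall i, i \in s -> 0 < i) ->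
  exists2 m, 0 < m & forall i, i \in s -> m <= i.
Proof.
elim: s => [|a s IH] h; first by exists 1.
case: IH => [i hi|m m0 hm]; first by apply: h; rewrite inE hi orbT.
have a0 : 0 < a by apply: h; rewrite inE eqxx.
exists (Num.min a m); first by rewrite lt_min a0 m0.
move=> i; rewrite inE => /orP [/eqP -> | hi]; first by rewrite ge_min lexx.
by rewrite ge_min hm ?orbT.
Qed.

Definition inAv A d (b : 'rV[Rr]_d) := forall i, inA A (b 0 i).

Lemma inA_closed A : closed [set r : Rr | inA A r].
Proof.
case: A => /=; first exact: Zset_closed.
by rewrite [X in closed X](_ : _ = setT) //; apply/seteqP; split.
Qed.

Lemma eps_noM d A (K X : set 'rV[Rr]_d) (M : 'M[Rr]_d) :
  compact K -> X !=set0 ->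
  ~ (exists b, inAv A b /\ forall x, X x -> K (x *m M + b)) ->
  exists2 e, 0 < e & forall b, inAv A b -> ~ (forall x, X x -> Ke K e (x *m M + b)).
Proof.
move=> cK [x0 Xx0] nc.
apply: contrapT => H.
have H' : forall e : Rr, 0 < e -> exists b, inAv A b /\ forall x, X x -> Ke K e (x *m M + b).
  move=> e e0; apply: contrapT => nb; apply: H; exists e => // b hb hx.
  by apply: nb; exists b; split.
pose f (e : Rr) := [set b | inAv A b] `&`
   \bigcap_(x in X) ((fun b => x *m M + b) @^-1` Ke K e).
have fcl : forall e : Rr, 0 <= e -> closed (f e).
  move=> e e0; apply: closedI.
    have -> : [set b | inAv A b] = \bigcap_(i in setT)
        ((fun b : 'rV[Rr]_d => b 0 i) @^-1` [set r | inA A r]).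
      by apply/seteqP; split => b /= hb i //=; apply: (hb i).
    apply: closed_bigI => i _; apply: preimage_closed; last exact: inA_closed.
    by move=> z _; exact: coord_continuous.
  apply: closed_bigI => x _; apply: preimage_closed.
    move=> z _; have := @continuousD Rr _ _ (fun=> x *m M) id z (@cst_continuous _ _ (x *m M) z) (@cvg_id _ _); exact.
  apply: compact_closed; [exact: norm_hausdorff | exact: Ke_compact].
have [r r0 hr] := compact_normbound cK.
have cA0 : compact (f 1).
  apply: bounded_closed_compact; last exact: fcl.
  apply: (@bounded_of _ _ (r + 1 + `|x0 *m M|)) => b [_ hb].
  have [k Kk hk] := hb x0 Xx0.
  have -> : b = (x0 *m M + b) - x0 *m M by rewrite addrAC subrr add0r.
  apply: le_trans (ler_normB _ _) _.
  have := ler_normB k (k - (x0 *m M + b)); rewrite opprB addrC subrK.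
  have := hr _ Kk; move: hk; lra.
have := cA0; rewrite compact_In0 => /(_ _ [set e : Rr | 0 < e <= 1] f).
case.
- exists f => [e /andP[e0 _]|e /andP[e0 e1]]; first exact: fcl (ltW e0).
  apply/seteqP; split => [b fb|b [_ fb]] //; split => //.
  case: fb => hA hX; split => // x Xx; apply: (Ke_mono e1); exact: (hX x Xx).
- move=> D' sD'.
  have [m m0 hm] : exists2 m : Rr, 0 < m & forall i, i \in enum_fset D' -> m <= i.
    apply: min_pos => i hi.
    by have := sD' i hi; move=> /set_mem /andP[].
  have [b [hA hX]] := H' m m0.
  exists b => i /= hi; split => // x Xx; apply: (Ke_mono (hm i hi)); exact: (hX x Xx).
- move=> b hb.
  apply: nc; exists b; split; first by have [] := hb 1 (ltac:(by rewrite /= ltr01 lexx)).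
  move=> x Xx; apply: Ke_cap; first by apply: compact_closed; [exact: norm_hausdorff | exact: cK].
  move=> e e0 e1.
  have [_ hX] := hb e (ltac:(by rewrite /= e0 e1)); exact: hX x Xx.
Qed.

Lemma ilinD d (u : 'rV[int]_d) x y : ilin u (x + y) = ilin u x + ilin u y.
Proof. by rewrite /ilin -big_split; apply: eq_bigr => j _; rewrite mxE mulrDr. Qed.

Lemma ilin_delta d (u : 'rV[int]_d) (c : Rr) i :
  ilin u (c *: delta_mx 0 i) = c * (u 0 i)%:~R.
Proof.
rewrite /ilin (bigD1 i) //= big1 => [|j ji]; last by rewrite !mxE (negPf ji) andbF mulr0 mulr0.
by rewrite !mxE !eqxx /= mulr1 addr0 mulrC.
Qed.

Lemma norm_delta d (i : 'I_d) : `|delta_mx 0 i : 'rV[Rr]_d| <= 1.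
Proof.
rewrite [X in X <= _]/Num.norm /= mx_normrE.
apply: bigmax_le => // -[a b] _ /=; rewrite mxE; case: (_ && _) => /=.
  by rewrite normr1.
by rewrite normr0.
Qed.

Lemma width_pt d (K : set 'rV[Rr]_d) u (e : Rr) : 0 <= e -> u != 0 ->
  forall x y, K x -> K y -> ilin u y <= ilin u x ->
  ((`|ilin u x - ilin u y| + 2 * e)%:E <= width_u u (Ke K e))%E.
Proof.
move=> e0 hu x y Kx Ky le.
have [i ui] : exists i, u 0 i != 0.
  apply: contrapT => H; move/negP: hu; apply; apply/eqP/rowP => j.
  rewrite mxE; apply/eqP/negPn/negP => hj; apply: H; by exists j.
pose a : Rr := (u 0 i)%:~R.
have a1 : 1 <= `|a| by apply: norm_intr_ge1; [exact: rpred_int | rewrite intr_eq0].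
pose s := Num.sg a.
have sa : s * a = `|a| by rewrite normrEsg.
have s1 : `|s| <= 1 by rewrite normr_sg; case: (a != 0).
pose v : 'rV[Rr]_d := delta_mx 0 i.
pose x' := x + (e * s) *: v.
pose y' := y + (- (e * s)) *: v.
have nv : forall c : Rr, `|c| <= e -> `|c *: v| <= e.
  move=> c hc; rewrite normrZ; apply: le_trans hc.
  by rewrite -[X in _ <= X]mulr1 ler_wpM2l // norm_delta.
have hes : forall c : Rr, `|c| = `|e * s| -> `|c| <= e.
  move=> c ->; rewrite normrM (ger0_norm e0) -[X in _ <= X]mulr1 ler_wpM2l //.
have Kx' : Ke K e x'.
  by exists x => //; rewrite /x' opprD addrA subrr sub0r normrN; apply: nv; apply: hes.
have Ky' : Ke K e y'.
  exists y => //; rewrite /y' opprD addrA subrr sub0r normrN; apply: nv; apply: hes.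
  by rewrite normrN.
have -> : (`|ilin u x - ilin u y| + 2 * e) = ilin u x' - ilin u y' - 2 * e * (`|a| - 1).
  rewrite /x' /y' !ilinD !ilin_delta -/a ger0_norm ?subr_ge0 //.
  have : e * s * a = e * `|a| by rewrite -mulrA sa.
  lra.
apply: le_trans (_ : ((`|ilin u x' - ilin u y'|)%:E <= _)%E).
  rewrite lee_fin; apply: le_trans (ler_norm _).
  have : 0 <= 2 * e * (`|a| - 1) by apply: mulr_ge0; [lra | lra].
  lra.
apply: ereal_sup_ubound; exists x' => //; exists y' => //.
Qed.

Lemma width_u_Ke d (K : set 'rV[Rr]_d) u (e : Rr) : 0 <= e -> u != 0 ->
  (width_u u K + (2 * e)%:E <= width_u u (Ke K e))%E.
Proof.
move=> e0 hu.
have pt : forall x y, K x -> K y ->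
    ((`|ilin u x - ilin u y| + 2 * e)%:E <= width_u u (Ke K e))%E.
  move=> x y Kx Ky; case/orP: (le_total (ilin u y) (ilin u x)) => le.
    exact: width_pt.
  rewrite distrC; exact: width_pt.
have h : (width_u u K <= width_u u (Ke K e) - (2 * e)%:E)%E.
  apply: ge_ereal_sup => _ [x Kx [y Ky <-]].
  move: (pt x y Kx Ky); case: (width_u u (Ke K e)) => [r||] //=.
    by rewrite !lee_fin => h; lra.
  by move=> _; rewrite addye // leey.
apply: le_trans (leeD2r _ h) _.
by rewrite subeK.
Qed.

Lemma width_Ke d (K : set 'rV[Rr]_d) (e : Rr) : 0 <= e ->
  (width K + (2 * e)%:E <= width (Ke K e))%E.
Proof.
move=> e0; apply: le_ereal_inf_tmp => _ [u /= hu <-].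
apply: le_trans (width_u_Ke K e0 hu); apply: leeD2r.
apply: ereal_inf_lbound; by exists u.
Qed.

Lemma seq_eps (T : eqType) (Q : T -> Rr -> Prop) (s : seq T) :
  (forall t e e', 0 < e' -> e' <= e -> Q t e -> Q t e') ->
  (forall t, t \in s -> exists2 e, 0 < e & Q t e) ->
  exists2 e, 0 < e & forall t, t \in s -> Q t e.
Proof.
move=> mono; elim: s => [|a s IH] h; first by exists 1.
case: IH => [t ht|m m0 hm]; first by apply: h; rewrite inE ht orbT.
have [ea ea0 hea] := h a (mem_head _ _).
exists (Num.min ea m); first by rewrite lt_min ea0 m0.
move=> t; rewrite inE => /orP [/eqP -> | ht].
  by apply: mono hea; rewrite ?lt_min ?ea0 ?m0 // ge_min lexx.
by apply: mono (hm t ht); rewrite ?lt_min ?ea0 ?m0 // ge_min lexx orbT.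
Qed.

Lemma fin_eps (T : finType) (Q : T -> Rr -> Prop) :
  (forall t e e', 0 < e' -> e' <= e -> Q t e -> Q t e') ->
  (forall t, exists2 e, 0 < e & Q t e) ->
  exists2 e, 0 < e & forall t, Q t e.
Proof.
move=> mono h; have [e e0 he] := @seq_eps _ Q (enum T) mono (fun t _ => h t).
by exists e => // t; apply: he; rewrite mem_enum.
Qed.

Definition decM d N (Nm : 'M['I_(N.*2.+1)]_d) : 'M[int]_d :=
  \matrix_(i, j) ((Nm i j : nat)%:Z - N%:Z).

Lemma decM_surj d N (M : 'M[int]_d) : (forall i j, `|M i j| <= N%:Z) ->
  exists Nm, @decM d N Nm = M.
Proof.
move=> hM.
exists (\matrix_(i, j) (inord (absz (M i j + N%:Z)) : 'I_(N.*2.+1))).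
apply/matrixP => i j; rewrite !mxE.
have := hM i j.
rewrite inordK; last first.
  have := hM i j; lia.
lia.
Qed.

Local Open Scope ring_scope.
Lemma lin_mx d (c x : 'rV[Rr]_d) : lin c x = (x *m c^T) 0 0.
Proof. rewrite /lin !mxE; apply: eq_bigr => i _; by rewrite !mxE mulrC. Qed.

Lemma diff_step d (X : set 'rV[Rr]_d) n (V : 'M[Rr]_(n, d)) : full_dim X ->
  (\rank V < d)%N ->
  exists x y, X x /\ X y /\ ~~ (x - y <= V)%MS.
Proof.
move=> fX rV.
set K0 := kermx V^T.
have rK : (0 < \rank K0)%N by rewrite mxrank_ker mxrank_tr subn_gt0.
have [i ci] : exists i, row i K0 != 0.
  apply/not_existsP => H; move: rK; suff -> : K0 = 0 by rewrite mxrank0.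
  by apply/row_matrixP => i; rewrite row0; apply/eqP/negPn/negP; apply: H.
have cV : row i K0 *m V^T = 0 by rewrite -row_mul mulmx_ker row0.
have [x [y [Xx [Xy hxy]]]] := fX _ ci.
exists x, y; split => //; split => //; apply/negP => /submxP [w vw].
move: hxy; rewrite !lin_mx.
have : (x - y) *m (row i K0)^T = 0.
  by rewrite vw -mulmxA -[V](trmxK V) -trmx_mul cV trmx0 mulmx0.
rewrite mulmxBl => /eqP; rewrite subr_eq0 => /eqP ->.
by rewrite eqxx.
Qed.

Lemma diff_basis d (X : set 'rV[Rr]_d) : full_dim X ->
  exists n (V : 'M[Rr]_(n, d)),
    (forall i, exists x y, X x /\ X y /\ row i V = x - y) /\ row_full V.
Proof.
move=> fX.
suff H : forall k, (k <= d)%N -> exists n (V : 'M[Rr]_(n, d)),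
    (forall i, exists x y, X x /\ X y /\ row i V = x - y) /\ (k <= \rank V)%N.
  have [n [V [h1 h2]]] := H d (leqnn d); exists n, V; split => //.
  by rewrite /row_full eqn_leq rank_leq_col h2.
elim => [|k IH] kd.
  by exists 0%N, 0; split => // i; case: i.
have [n [V [h1 h2]]] := IH (ltnW kd).
have [lt|ge] := ltnP k (\rank V).
  by exists n, V.
have rV : (\rank V < d)%N by apply: leq_ltn_trans ge kd.
have [x [y [Xx [Xy nxy]]]] := diff_step fX rV.
exists (n + 1)%N, (col_mx V (x - y)); split.
  move=> i; rewrite -(@splitK n 1 i); case: (fintype.split i) => j /=.
    by rewrite rowKu; apply: h1.
  by rewrite rowKd; exists x, y; split => //; split => //; rewrite row_id.
have lt : (V < col_mx V (x - y))%MS.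
  rewrite ltmxE -!addsmxE addsmxSl /= addsmx_sub submx_refl /=.
  exact: nxy.
have Ek : \rank V = k by apply/eqP; rewrite eqn_leq h2 ge.
by have := rank_ltmx lt; rewrite Ek.
Qed.

Lemma entry_le_norm m n (A : 'M[Rr]_(m, n)) i j : `|A i j| <= `|A|.
Proof.
rewrite [X in _ <= X]/Num.norm /= mx_normrE.
exact: (le_bigmax _ (fun ij : 'I_m * 'I_n => `|A ij.1 ij.2|) (i, j)).
Qed.

Lemma M_bound d (X : set 'rV[Rr]_d) (R0 : Rr) : full_dim X ->
  exists N : nat, forall (M : 'M[int]_d) (b : 'rV[Rr]_d),
   (forall x, X x -> `|x *m map_mx intr M + b| <= R0) ->
   forall i j, (`|M i j| <= N%:Z)%R.
Proof.
move=> fX.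
have [n [V [hV fV]]] := diff_basis fX.
have /row_fullP [W WV] := fV.
pose c := 2 * `|R0|.
pose Cst := \sum_i \sum_k `|W i k| * c.
exists (Num.truncn Cst).+1 => M b hb i j.
pose M' := map_mx intr M : 'M[Rr]_d.
have eM : M' = W *m (V *m M') by rewrite mulmxA WV mul1mx.
have bVM : forall k l, `|(V *m M') k l| <= c.
  move=> k l; have [x [y [Xx [Xy rk]]]] := hV k.
  have E1 : (V *m M') k l = (row k (V *m M')) 0 l by rewrite !mxE.
  rewrite E1.
  rewrite row_mul rk.
  have -> : (x - y) *m M' = (x *m M' + b) - (y *m M' + b).
    by rewrite mulmxBl opprD addrACA subrr addr0.
  apply: le_trans (entry_le_norm _ _ _) _.
  apply: le_trans (ler_normB _ _) _.
  have := hb _ Xx; have := hb _ Xy; have := ler_norm R0; rewrite /c /M'; lra.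
have hC : `|M' i j| <= Cst.
  rewrite eM mxE; apply: le_trans (ler_norm_sum _ _ _) _.
  apply: (@le_trans _ _ (\sum_k `|W i k| * c)).
    by apply: ler_sum => k0 _; rewrite normrM; apply: ler_wpM2l => //; apply: bVM.
  rewrite /Cst (bigD1 i) //= lerDl; apply: sumr_ge0 => i' _.
  by apply: sumr_ge0 => k0 _; apply: mulr_ge0 => //; rewrite /c mulr_ge0.
have h : ((`|M i j|)%:~R : Rr) <= (((Num.truncn Cst).+1)%:Z)%:~R.
  rewrite intr_norm; apply: le_trans (ltW (truncnS_gt Cst)).
  by move: hC; rewrite /M' mxE.
by rewrite ler_int in h.
Qed.


Lemma ilin_e0 d (x : 'rV[Rr]_d.+1) : ilin (delta_mx 0 0) x = x 0 0.
Proof.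
rewrite /ilin (bigD1 0) //= big1 => [|j j0]; last by rewrite !mxE (negPf j0) andbF mul0r.
by rewrite !mxE !eqxx /= mul1r addr0.
Qed.

Lemma Ke_norm d (K : set 'rV[Rr]_d) r e y : (forall x, K x -> `|x| < r) ->
  Ke K e y -> `|y| <= r + e.
Proof.
move=> hr [k Kk hk].
have := ler_normB k (k - y); rewrite opprB addrC subrK.
have := hr _ Kk; move: hk; lra.
Qed.

Unset Implicit Arguments.
Set Strict Implicit.

Theorem proposition2p9 (A : coeffA) (d : nat) (K X : set 'rV[Rr]_d) :
  convex_body K -> full_dim K ->
  convex_body X -> full_dim X ->
  width K = Flt A X ->
  contains_copy A K X.
Proof.
case: d K X => [|d] K X cbK fK cbX fX hW.
  have [k Kk] := cbK.1.
  exists 1%:M, 0; split; first by split; [exact: unitmx1 | case].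
  by move=> _ [x Xx <-]; rewrite (thinmx0 (x *m _ + 0)) -(thinmx0 k).
apply: contrapT => nc.
have [x0 Xx0] := cbX.1.
have cK := cbK.2.1.
have [r r0 hr] := compact_normbound cK.
have [N hN] := M_bound (r + 1) fX.
pose Q (Nm : 'M['I_(N.*2.+1)]_d.+1) (e : Rr) := e <= 1 /\
  (decM Nm \in unitmx -> forall b, inAv A b ->
    ~ (forall x, X x -> Ke K e (x *m map_mx intr (decM Nm) + b))).
have [e e0 he] : exists2 e, 0 < e & forall t, Q t e.
  apply: fin_eps.
    move=> t e e' e'0 ee' [e1 h]; split; first exact: le_trans e1.
    move=> u b hb hx; apply: (h u b hb) => x Xx; apply: (Ke_mono ee'); exact: (hx x Xx).
  move=> t; case: (boolP (decM t \in unitmx)) => ut; last first.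
    by exists 1 => //; split => // ut'; rewrite ut' in ut.
  have nc' : ~ (exists b, inAv A b /\ forall x, X x -> K (x *m map_mx intr (decM t) + b)).
    move=> [b [hb hx]]; apply: nc; exists (decM t), b; split => //.
    by move=> _ [x Xx <-]; exact: hx.
  have [e e0 he] := eps_noM cK (ex_intro _ x0 Xx0) nc'.
  exists (Num.min e 1); first by rewrite lt_min e0 ltr01.
  split; first by rewrite ge_min lexx orbT.
  move=> _ b hb hx; apply: (he b hb) => x Xx.
  apply: (Ke_mono _ (hx x Xx)); by rewrite ge_min lexx.
have e1 : e <= 1 by have [] := he (\matrix_(i, j) ord0).
have ncK : ~ contains_copy A (Ke K e) X.
  move=> [M [b [[uM hb] sub]]].
  have hx : forall x, X x -> Ke K e (x *m map_mx intr M + b).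
    by move=> x Xx; apply: sub; exists x.
  have hM := hN M b (fun x Xx => Ke_norm hr (Ke_mono e1 (hx x Xx))).
  have [Nm eNm] := decM_surj hM.
  have [_ h] := he Nm; rewrite eNm in h.
  exact: h uM b hb hx.
have hle : (width (Ke K e) <= Flt A X)%E.
  apply: ereal_sup_ubound; exists (Ke K e) => //; split => //.
  apply: Ke_body => //; exact: ltW.
have := le_trans (width_Ke K (ltW e0)) hle; rewrite -hW.
have wge0 : (0 <= width K)%E.
  apply: le_ereal_inf_tmp => _ [u _ <-].
  have [k Kk] := cbK.1.
  apply: le_trans (ereal_sup_ubound _); last by exists k => //; exists k.
  by rewrite subrr normr0.
have wle : (width K <= (2 * r)%:E)%E.
  apply: (@le_trans _ _ (width_u (delta_mx 0 0) K)).
    apply: ereal_inf_lbound; exists (delta_mx 0 0) => //=.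
    by apply/eqP => /matrixP /(_ 0 0); rewrite !mxE !eqxx.
  apply: ge_ereal_sup => _ [x Kx [y Ky <-]]; rewrite !ilin_e0 lee_fin.
  apply: le_trans (ler_normB _ _) _.
  have := le_lt_trans (entry_le_norm x 0 0) (hr x Kx).
  have := le_lt_trans (entry_le_norm y 0 0) (hr y Ky); lra.
move: wge0 wle; case: (width K) => [w||] //= w0 wr.
rewrite lee_fin; lra.
Qed.
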